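(* Let $\mathcal{M}=(\mathcal{S},\mathcal{A},\mathcal{P},r,p_0)$ be an infinite-horizon MDP as described in the context, let $D\in\mathbb{N}$, let $\gamma_0,\dots,\gamma_D\in(0,1)$, and let $\pi$ be a stationary policy. For $d\in\{0,\dots,D\}$ let $$Q_d^\pi(s,a):=\mathbb{E}_\pi\Big[\sum_{t=0}^\infty \Phi_d(t)\, r(s_t,a_t)\,\Big|\, s_0=s,a_0=a\Big].$$ Define the operator $T_\pi^D$ on bounded functions $q:\mathcal{S}\times\mathcal{A}\to\mathbb{R}$ by $$[T_\pi^D(q)](s,a)= r_D^\pi(s,a)+\gamma_D\,\mathbb{E}_{s'\sim\mathcal{P}(s,a),\,a'\sim\pi(s')}\big[q(s',a')\big],\qquad r_D^\pi(s,a):=\mathbb{E}_{s'\sim\mathcal{P}(s,a),\,a'\sim\pi(s')}\Big[r(s,a)+\sum_{d=0}^{D-1}\gamma_d\,Q_d^\pi(s',a')\Big].$$ Then $T_\pi^D$ is a $\gamma_D$-contraction and $Q_D^\pi$ is its unique fixed point.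
   Context: $\mathcal{S}\subseteq\mathbb{R}^{k}$ and $\mathcal{A}\subseteq\mathbb{R}^{k'}$ are finite or compact sets, $\mathcal{P}:\mathcal{S}\times\mathcal{A}\to\Delta(\mathcal{S})$ is a transition kernel, $r:\mathcal{S}\times\mathcal{A}\to\mathbb{R}$ is a continuous reward function, $p_0\in\Delta(\mathcal{S})$ an initial distribution. $\mathbb{E}_\pi$ denotes expectation over trajectories $(s_t,a_t)_{t\ge0}$ with $s_{t+1}\sim\mathcal{P}(s_t,a_t)$ and $a_t\sim\pi(s_t)$ for $t\ge1$. For discount factors $\gamma_0,\dots,\gamma_D\in(0,1)$ and $d\le D$, the delayed weights are $$\Phi_d(t):=\sum_{\substack{(a_0,\dots,a_d)\in\mathbb{N}^{d+1}\\ a_0+\dots+a_d=t}}\ \prod_{i=0}^{d}\gamma_i^{a_i},\qquad t\in\mathbb{N},$$ so that $\Phi_0(t)=\gamma_0^t$. Contraction is with respect to the supremum norm. *)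

(* Defs.v *)
From HB Require Import structures.
From mathcomp Require Import all_boot all_order all_algebra.
From mathcomp Require Import all_classical all_reals.
From mathcomp Require Import ereal topology normedtype sequences measure.
From mathcomp Require Import lebesgue_measure lebesgue_integral kernel.

Set Implicit Arguments.
Unset Strict Implicit.
Unset Printing Implicit Defensive.
Import Order.TTheory GRing.Theory Num.Theory.
Local Open Scope ring_scope.
Local Open Scope classical_set_scope.

(* Delayed weights: Phi_d(t) = sum over (a_0,...,a_d) in N^{d+1} with
   a_0+...+a_d = t of prod_i gamma_i^{a_i}.  Since each a_i <= t, we range
   over finite functions 'I_(d+1) -> 'I_(t+1). *)
Definition Phi (R : realType) (gamma : nat -> R) (d t : nat) : R :=
  \sum_(a : {ffun 'I_d.+1 -> 'I_t.+1} | (\sum_(i < d.+1) (a i : nat))%N == t)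
     \prod_(i < d.+1) gamma (i : nat) ^+ (a i : nat).

Section mdp.
Context (R : realType) (d1 d2 : measure_display)
  (S : measurableType d1) (A : measurableType d2).

Definition next_exp (P : R.-pker (S * A)%type ~> S) (pi : R.-pker S ~> A)
    (q : S * A -> R) (sa : S * A) : R :=
  fine (\int[P sa]_s' \int[pi s']_a' (q (s', a'))%:E)%E.

(* E_pi[ r(s_t,a_t) | s_0 = s, a_0 = a ] = (next_exp^t r)(s,a) *)
Definition step_exp (P : R.-pker (S * A)%type ~> S) (pi : R.-pker S ~> A)
    (r : S * A -> R) (t : nat) : S * A -> R :=
  iter t (next_exp P pi) r.

Definition Qd (P : R.-pker (S * A)%type ~> S) (pi : R.-pker S ~> A)
    (r : S * A -> R) (gamma : nat -> R) (d : nat) (sa : S * A) : R :=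
  limn (fun n => \sum_(0 <= t < n) Phi gamma d t * step_exp P pi r t sa).

Definition rD (P : R.-pker (S * A)%type ~> S) (pi : R.-pker S ~> A)
    (r : S * A -> R) (gamma : nat -> R) (D : nat) (sa : S * A) : R :=
  next_exp P pi
    (fun sa' => r sa + \sum_(0 <= d < D) gamma d * Qd P pi r gamma d sa') sa.

Definition TD (P : R.-pker (S * A)%type ~> S) (pi : R.-pker S ~> A)
    (r : S * A -> R) (gamma : nat -> R) (D : nat) (q : S * A -> R)
    (sa : S * A) : R :=
  rD P pi r gamma D sa + gamma D * next_exp P pi q sa.

End mdp.

Definition bounded_fn (T : Type) (R : realType) (f : T -> R) : Prop :=
  exists M : R, forall x, `|f x| <= M.

Definition supnorm (T : Type) (R : realType) (f : T -> R) : R :=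
  sup [set `|f x| | x in [set: T]].

(* Main.v *)
Require Import Defs.
From HB Require Import structures.
From mathcomp Require Import all_boot all_order all_algebra.
From mathcomp Require Import all_classical all_reals.
From mathcomp Require Import ereal topology normedtype sequences measure.
From mathcomp Require Import lebesgue_measure lebesgue_integral kernel.
From mathcomp Require Import measurable_realfun.
From mathcomp Require Import ring lra.
Import Order.TTheory GRing.Theory Num.Theory.
Import numFieldNormedType.Exports.
Local Open Scope ring_scope.
Local Open Scope classical_set_scope.


Section PhiComb.
Context {R : realType} (g : nat -> R).

Definition pg i K : {poly R} := \poly_(a < K) (g i ^+ a).
Definition G d K : {poly R} := \prod_(i < d.+1) pg i K.

Lemma prod_scaleX n (c : 'I_n -> R) (a : 'I_n -> nat) :
  \prod_(i < n) (c i *: 'X^(a i)) = (\prod_(i < n) c i) *: ('X^(\sum_(i < n) a i) : {poly R}).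
Proof.
elim: n c a => [|n IH] c a; first by rewrite !big_ord0 scale1r expr0.
rewrite !big_ord_recr /= IH exprD -scalerAl -scalerAr scalerA.
by congr (_ *: _); rewrite mulrC.
Qed.

Lemma G_expand d K : G d K =
  \sum_(f : {ffun 'I_d.+1 -> 'I_K})
     (\prod_(i < d.+1) g i ^+ f i) *: 'X^(\sum_(i < d.+1) (f i : nat)).
Proof.
rewrite /G /pg.
under eq_bigr do rewrite poly_def.
rewrite bigA_distr_bigA /=.
by apply: eq_bigr => f _; rewrite prod_scaleX.
Qed.

Lemma Phi_G d t : Phi g d t = (G d t.+1)`_t.
Proof.
rewrite G_expand coef_sum /Phi big_mkcond /=.
apply: eq_bigr => f _; rewrite coefZ coefXn.
by rewrite eq_sym; case: eqP => _; rewrite ?mulr1 ?mulr0.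
Qed.

Lemma pgS i K : pg i K.+1 = pg i K + 'X^K * (g i ^+ K)%:P.
Proof.
by rewrite /pg !poly_def big_ord_recr /= [_ * _%:P]mulrC mul_polyC.
Qed.

Lemma GS d K : exists H, G d K.+1 = G d K + 'X^K * H.
Proof.
elim: d => [|d [H IH]].
  by exists (g 0%N ^+ K)%:P; rewrite /G !big_ord1 pgS.
exists (H * pg (d.+1) K + G d K * (g d.+1 ^+ K)%:P + 'X^K * H * (g d.+1 ^+ K)%:P).
rewrite /G big_ord_recr /= -/(G d K.+1) IH pgS [X in _ = X + _]big_ord_recr /= -/(G d K).
ring.
Qed.

Lemma G_trunc d K t : (t < K)%N -> (G d K)`_t = (G d K.+1)`_t.
Proof.
move=> tK; have [H ->] := GS d K.
by rewrite coefD coefXnM tK addr0.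
Qed.

Lemma Phi_GK d t K : (t < K)%N -> Phi g d t = (G d K)`_t.
Proof.
move=> tK; rewrite Phi_G.
elim: K tK => [//|K IH]; rewrite ltnS leq_eqVlt => /orP[/eqP<-//|tK].
by rewrite IH // G_trunc.
Qed.

Lemma Phi0t t : Phi g 0 t = g 0%N ^+ t.
Proof. by rewrite Phi_G /G big_ord1 /pg coef_poly ltnSn. Qed.

Lemma PhiSt d t : Phi g d.+1 t = \sum_(j < t.+1) Phi g d j * g d.+1 ^+ (t - j).
Proof.
rewrite (Phi_GK d.+1 t t.+1 (ltnSn t)) /G big_ord_recr /= -/(G d t.+1) coefM.
apply: eq_bigr => j _; rewrite (Phi_GK d j t.+1 (ltn_ord j)) /pg coef_poly.
by rewrite ltnS leq_subr.
Qed.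

Lemma Phid0 d : Phi g d 0 = 1.
Proof.
elim: d => [|d IH]; first by rewrite Phi0t expr0.
by rewrite PhiSt big_ord1 IH subnn expr0 mulr1.
Qed.

Lemma PhiSS d t : Phi g d.+1 t.+1 = Phi g d t.+1 + g d.+1 * Phi g d.+1 t.
Proof.
rewrite !PhiSt big_ord_recr /= subnn expr0 mulr1 addrC; congr (_ + _).
rewrite mulr_sumr; apply: eq_bigr => j _.
by rewrite subSn ?exprS 1?mulrCA // -ltnS.
Qed.

Lemma Phi_rec D t : Phi g D t.+1 = \sum_(d < D.+1) g d * Phi g d t.
Proof.
elim: D => [|D IH]; first by rewrite big_ord1 !Phi0t exprS.
by rewrite PhiSS IH [RHS]big_ord_recr.
Qed.

Lemma Phi_ge0 d t : (forall i, (i <= d)%N -> 0 <= g i) -> 0 <= Phi g d t.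
Proof.
move=> g0; rewrite /Phi; apply: sumr_ge0 => f _; apply: prodr_ge0 => i _.
by apply: exprn_ge0; apply: g0; rewrite -ltnS.
Qed.

End PhiComb.

Section KInt.
Context {R : realType} {d d' : measure_display} {X : measurableType d} {Y : measurableType d'}
  {k : R.-pker X ~> Y}.

Definition J (f : X * Y -> R) (x : X) : R := Rintegral (k x) setT (fun y => f (x, y)).

Lemma kcst_int (x : X) (M : R) : (k x).-integrable setT (EFin \o cst M).
Proof.
apply/integrableP; split; first exact/measurable_EFinP/measurable_cst.
rewrite (eq_integral (cst `|M|%:E)) //.
by rewrite integral_cst // prob_kernel mule1 ltry.
Qed.

Lemma J_int {f : X * Y -> R} {M : R} x : measurable_fun setT f -> (forall z, `|f z| <= M) ->
  (k x).-integrable setT (EFin \o (fun y => f (x, y))).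
Proof.
move=> mf fM; apply: (le_integrable measurableT _ _ (kcst_int x M)) => //.
  exact/measurable_EFinP/measurable_fun_pair2.
move=> y _ /=; rewrite lee_fin (le_trans (fM _)) //.
exact: ler_norm.
Qed.

Lemma J_bound {f : X * Y -> R} {M : R} x : measurable_fun setT f -> (forall z, `|f z| <= M) ->
  `|J f x| <= M.
Proof.
move=> mf fM; rewrite /J; apply: (le_trans (le_normr_Rintegral _ _)) => //.
  exact: J_int fM.
apply: (@le_trans _ _ (Rintegral (k x) setT (fun _ => M))).
  apply: le_Rintegral => //.
  - apply: (@J_int (fun z => `|f z|) M x).
      exact: measurableT_comp.
    by move=> z /=; rewrite normr_id.
  - exact: kcst_int.
by rewrite Rintegral_cst // prob_kernel mulr1.
Qed.

Lemma J_cst (c : R) x : J (fun _ => c) x = c.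
Proof. by rewrite /J Rintegral_cst // prob_kernel mulr1. Qed.

Lemma J_add {f1 f2 : X * Y -> R} {M1 M2 : R} x :
  measurable_fun setT f1 -> (forall z, `|f1 z| <= M1) ->
  measurable_fun setT f2 -> (forall z, `|f2 z| <= M2) ->
  J (fun z => f1 z + f2 z) x = J f1 x + J f2 x.
Proof.
move=> m1 b1 m2 b2; rewrite /J RintegralD //.
  exact: J_int b1.
exact: J_int b2.
Qed.

Lemma J_scale {f : X * Y -> R} {M : R} (c : R) x :
  measurable_fun setT f -> (forall z, `|f z| <= M) ->
  J (fun z => c * f z) x = c * J f x.
Proof.
move=> m b; rewrite /J RintegralZl //; exact: J_int b.
Qed.

Lemma J_meas {f : X * Y -> R} {M : R} : measurable_fun setT f -> (forall z, `|f z| <= M) ->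
  measurable_fun setT (J f).
Proof.
move=> mf fM.
have e : J f = (fun x => J (fun z => f z + M) x - M).
  apply/funext => x.
  rewrite (@J_add f (fun _ => M) M `|M| x mf fM (measurable_cst M) (fun _ => lexx _)).
  by rewrite J_cst addrK.
rewrite e; apply: measurable_funB => //.
rewrite /J /Rintegral; apply: measurableT_comp => //.
apply: (measurable_fun_integral_finite_kernel (fun z => (f z + M)%:E)%E k).
  move=> z; rewrite lee_fin -lerBlDr sub0r.
  by have := fM z; rewrite ler_norml => /andP[].
exact/measurable_EFinP/measurable_funD.
Qed.

End KInt.
Arguments J {R d d' X Y} k f x.

Section BMs.
Context {R : realType} {d : measure_display} {T : measurableType d}.
Definition BM (f : T -> R) := measurable_fun setT f /\ bounded_fn f.

Lemma BM_cst c : BM (fun _ => c).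
Proof. by split => //; exists `|c|. Qed.

Lemma BM_add {f g} : BM f -> BM g -> BM (fun z => f z + g z).
Proof.
move=> [mf [Mf hf]] [mg [Mg hg]]; split; first exact: measurable_funD.
by exists (Mf + Mg) => z; rewrite (le_trans (ler_normD _ _)) // lerD.
Qed.

Lemma BM_scale c {f} : BM f -> BM (fun z => c * f z).
Proof.
move=> [mf [Mf hf]]; split; first exact: measurable_funM.
by exists (`|c| * Mf) => z; rewrite normrM ler_wpM2l.
Qed.

Lemma BM_opp {f} : BM f -> BM (fun z => - f z).
Proof.
move=> [mf [Mf hf]]; split; first exact: measurableT_comp.
by exists Mf => z; rewrite normrN.
Qed.

Lemma BM_sub {f g} : BM f -> BM g -> BM (fun z => f z - g z).
Proof. by move=> hf hg; apply: BM_add => //; exact: BM_opp. Qed.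

Lemma BM_sum (I : Type) (s : seq I) (F : I -> T -> R) :
  (forall i, BM (F i)) -> BM (fun z => \sum_(i <- s) F i z).
Proof.
move=> hF; elim: s => [|i s IH].
  by under eq_fun do rewrite big_nil; exact: BM_cst.
by under eq_fun do rewrite big_cons; exact: BM_add.
Qed.
End BMs.

Section NextExp.
Context {R : realType} {d1 d2 : measure_display}
  {S : measurableType d1} {A : measurableType d2}
  (P : R.-pker (S * A)%type ~> S) (pi : R.-pker S ~> A).

Local Notation N := (next_exp P pi).
Implicit Types (q : S * A -> R) (M c : R).

Lemma Jsnd_meas {q M} : measurable_fun setT q -> (forall z, `|q z| <= M) ->
  measurable_fun setT (fun z : (S * A) * S => J pi q z.2).
Proof.
move=> mq hq; apply: (measurableT_comp (f := J pi q) (g := snd)) => //.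
exact: J_meas hq.
Qed.

Lemma N_J {q M} : measurable_fun setT q -> (forall z, `|q z| <= M) ->
  N q = J P (fun z => J pi q z.2).
Proof.
move=> mq hq; apply/funext => sa; rewrite /next_exp /J /Rintegral; congr fine.
apply: eq_integral => s' _; rewrite fineK //.
exact: integrable_fin_num (J_int _ mq hq).
Qed.

Lemma N_le {q M} : measurable_fun setT q -> (forall z, `|q z| <= M) ->
  forall sa, `|N q sa| <= M.
Proof.
move=> mq hq sa; rewrite (N_J mq hq); apply: J_bound => //.
  exact: Jsnd_meas hq.
by move=> z; exact: J_bound.
Qed.

Lemma N_BM q : BM q -> BM (N q).
Proof.
move=> [mq [M hq]]; split; last by exists M; exact: N_le hq.
rewrite (N_J mq hq); apply: (J_meas (M := M)).
  exact: Jsnd_meas hq.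
by move=> z; exact: J_bound.
Qed.

Lemma N_add q1 q2 : BM q1 -> BM q2 ->
  N (fun z => q1 z + q2 z) = (fun sa => N q1 sa + N q2 sa).
Proof.
move=> h1 h2; have h12 := BM_add h1 h2.
move: h1 h2 h12 => [m1 [M1 b1]] [m2 [M2 b2]] [m12 [M12 b12]].
apply/funext => sa; rewrite (N_J m1 b1) (N_J m2 b2) (N_J m12 b12).
have -> : (fun z : (S * A) * S => J pi (fun z0 => q1 z0 + q2 z0) z.2) =
          (fun z => J pi q1 z.2 + J pi q2 z.2).
  by apply/funext => z; rewrite (J_add _ m1 b1 m2 b2).
apply: (J_add (M1 := M1) (M2 := M2)).
- exact: Jsnd_meas b1.
- by move=> z; exact: J_bound.
- exact: Jsnd_meas b2.
- by move=> z; exact: J_bound.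
Qed.

Lemma N_scale c q : BM q -> N (fun z => c * q z) = (fun sa => c * N q sa).
Proof.
move=> h; have hc := BM_scale c h.
move: h hc => [m [M b]] [mc [Mc bc]].
apply/funext => sa; rewrite (N_J m b) (N_J mc bc).
have -> : (fun z : (S * A) * S => J pi (fun z0 => c * q z0) z.2) =
          (fun z => c * J pi q z.2).
  by apply/funext => z; rewrite (J_scale _ _ m b).
apply: (J_scale (M := M)).
- exact: Jsnd_meas b.
- by move=> z; exact: J_bound.
Qed.

Lemma N_cst c : N (fun _ => c) = (fun _ => c).
Proof.
rewrite (N_J (M := `|c|)) //; apply/funext => sa.
by under eq_fun do rewrite J_cst; rewrite J_cst.
Qed.

Lemma N_sub q1 q2 : BM q1 -> BM q2 ->
  N (fun z => q1 z - q2 z) = (fun sa => N q1 sa - N q2 sa).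
Proof.
move=> h1 h2; rewrite N_add //; last exact: BM_opp.
apply/funext => sa; congr (_ + _).
have -> : (fun z => - q2 z) = (fun z => (-1) * q2 z) by apply/funext => z; rewrite mulN1r.
by rewrite N_scale // mulN1r.
Qed.

Lemma N_sum (I : Type) (s : seq I) (F : I -> S * A -> R) :
  (forall i, BM (F i)) ->
  N (fun z => \sum_(i <- s) F i z) = (fun sa => \sum_(i <- s) N (F i) sa).
Proof.
move=> hF; elim: s => [|i s IH].
  by under eq_fun do rewrite big_nil; rewrite N_cst; apply/funext => sa; rewrite big_nil.
under eq_fun do rewrite big_cons; rewrite N_add //; last exact: BM_sum.
by rewrite IH; apply/funext => sa; rewrite big_cons.
Qed.

End NextExp.

Section Geo.
Context {R : realType}.

Lemma geo_bound (a b : nat -> R) (c B : R) : 0 <= c < 1 -> (forall t, 0 <= a t) ->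
  a 0%N = b 0%N -> (forall t, a t.+1 = b t.+1 + c * a t) ->
  (forall n, \sum_(0 <= t < n) b t <= B) -> 0 <= B ->
  forall n, \sum_(0 <= t < n) a t <= B / (1 - c).
Proof.
move=> /andP[c0 c1] a0 ab0 ab bB B0 [|n].
  by rewrite big_geq // divr_ge0 // subr_ge0 ltW.
have e : \sum_(0 <= t < n.+1) a t = \sum_(0 <= t < n.+1) b t + c * \sum_(0 <= t < n) a t.
  rewrite !big_nat_recl // ab0 -addrA; congr (_ + _).
  by rewrite mulr_sumr -big_split /=; apply: eq_bigr => t _; rewrite ab.
have le : \sum_(0 <= t < n) a t <= \sum_(0 <= t < n.+1) a t.
  by rewrite big_nat_recr //= lerDl.
rewrite ler_pdivlMr ?subr_gt0 // mulrBr mulr1 lerBlDr.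
rewrite [_ * c]mulrC; apply: (le_trans _ (lerD (bB n.+1) (ler_wpM2l c0 le))).
by rewrite e.
Qed.

End Geo.

Lemma Phi_sum_bound {R : realType} (g : nat -> R) d :
  (forall i, (i <= d)%N -> 0 < g i < 1) ->
  exists2 B, 0 <= B & forall n, \sum_(0 <= t < n) Phi g d t <= B.
Proof.
elim: d => [|d IH] hg.
  have /andP[g0 g1] := hg 0%N (leqnn 0).
  exists (1 / (1 - g 0%N)); first by rewrite divr_ge0 // subr_ge0 ltW.
  apply: (@geo_bound _ _ (fun t => (t == 0%N)%:R)).
  - by rewrite ltW.
  - by move=> t; rewrite Phi0t exprn_ge0 // ltW.
  - by rewrite Phi0t.
  - by move=> t; rewrite !Phi0t exprS add0r.
  - case=> [|n]; first by rewrite big_geq.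
    rewrite big_nat_recl //= big1 ?addr0 // => t _.
  - by [].
have [B B0 hB] := IH (fun i hi => hg i (leqW hi)).
have /andP[g0 g1] := hg d.+1 (leqnn _).
exists (B / (1 - g d.+1)); first by rewrite divr_ge0 // subr_ge0 ltW.
apply: (@geo_bound _ _ (Phi g d)) => //.
- by rewrite ltW.
- move=> t; apply: Phi_ge0 => i hi.
  by have /andP[] := hg i hi; move=> /ltW.
- by rewrite !Phid0.
- by move=> t; rewrite PhiSS.
Qed.

Lemma squeeze0 {R : realType} (b e : nat -> R) (a : R) :
  e n @[n --> \oo] --> 0 -> (forall n, `|a - b n| <= e n) -> b n @[n --> \oo] --> a.
Proof.
move=> e0 h; apply/cvgrPdist_le => eps eps0.
move/cvgrPdist_le : e0 => /(_ eps eps0).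
apply: filterS => n; rewrite sub0r normrN => /(le_trans _); apply.
exact: le_trans (h n) (ler_norm _).
Qed.

Lemma cvg_bigsum {R : realType} (D : nat) (u : nat -> nat -> R) (l : nat -> R) :
  (forall d, (d < D)%N -> u d n @[n --> \oo] --> l d) ->
  (fun n => \sum_(0 <= d < D) u d n) @ \oo --> \sum_(0 <= d < D) l d.
Proof.
elim: D => [|D IH] h.
  by under eq_fun do rewrite big_geq //; rewrite big_geq //; exact: cvg_cst.
under eq_fun do rewrite big_nat_recr //=; rewrite big_nat_recr //=.
apply: cvgD; last exact: h.
by apply: IH => d dD; apply: h; exact: ltnW.
Qed.

Lemma BM_sumn {R : realType} {d : measure_display} {T : measurableType d}
  (D : nat) (F : nat -> T -> R) :
  (forall i, (i < D)%N -> BM (F i)) -> BM (fun z => \sum_(0 <= i < D) F i z).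
Proof.
elim: D => [|D IH] h.
  by under eq_fun do rewrite big_geq //; exact: BM_cst.
under eq_fun do rewrite big_nat_recr //=.
apply: BM_add; last exact: h.
by apply: IH => i iD; apply: h; exact: ltnW.
Qed.

Lemma N_sumn {R : realType} {d1 d2 : measure_display}
  {S : measurableType d1} {A : measurableType d2}
  (P : R.-pker (S * A)%type ~> S) (pi : R.-pker S ~> A) (D : nat) (F : nat -> S * A -> R) :
  (forall i, (i < D)%N -> BM (F i)) ->
  next_exp P pi (fun z => \sum_(0 <= i < D) F i z) =
  (fun sa => \sum_(0 <= i < D) next_exp P pi (F i) sa).
Proof.
elim: D => [|D IH] h.
  under eq_fun do rewrite big_geq //; rewrite N_cst.
  by apply: boolp.funext => sa; rewrite big_geq.
under eq_fun do rewrite big_nat_recr //=.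
rewrite (N_add P pi); last exact: h.
  rewrite IH; last by move=> i iD; apply: h; exact: ltnW.
  by apply: boolp.funext => sa; rewrite big_nat_recr.
by apply: BM_sumn => i iD; apply: h; exact: ltnW.
Qed.

Section Main.
Context {R : realType} {d1 d2 : measure_display}
  {S : measurableType d1} {A : measurableType d2}
  (P : R.-pker (S * A)%type ~> S) (pi : R.-pker S ~> A)
  (r : S * A -> R) (g : nat -> R) (M : R).
Hypotheses (mr : measurable_fun setT r) (hM : forall z, `|r z| <= M) (M0 : 0 <= M).

Local Notation N := (next_exp P pi).
Local Notation f := (step_exp P pi r).

Lemma f_prop t : measurable_fun setT (f t) /\ forall z, `|f t z| <= M.
Proof.
elim: t => [|t [m b]]; first by split.
split; last exact: (N_le P pi m b).
by have [] := N_BM P pi (f t) (conj m (ex_intro _ M b)).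
Qed.

Lemma f_BM t : BM (f t).
Proof. by have [m b] := f_prop t; split => //; exists M. Qed.

Lemma fS t : f t.+1 = N (f t).
Proof. by []. Qed.

Section Fixd.
Variables (d : nat) (hg : forall i, (i <= d)%N -> 0 < g i < 1).

Definition ps n sa := \sum_(0 <= t < n) Phi g d t * f t sa.
Definition sphi n := \sum_(0 <= t < n) Phi g d t.

Lemma phi0 t : 0 <= Phi g d t.
Proof. by apply: Phi_ge0 => i hi; have /andP[/ltW] := hg i hi. Qed.

Lemma sphi_nd : nondecreasing_seq sphi.
Proof.
apply/nondecreasing_seqP => n; rewrite /sphi big_nat_recr //= lerDl; exact: phi0.
Qed.

Lemma sphi_cvg : cvgn sphi.
Proof.
apply: nondecreasing_is_cvgn; first exact: sphi_nd.
have [B _ hB] := Phi_sum_bound g d hg.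
by exists B => _ [n _ <-]; exact: hB.
Qed.

Definition Lphi := limn sphi.

Lemma sphi_le n : sphi n <= Lphi.
Proof. exact: nondecreasing_cvgn_le sphi_nd sphi_cvg n. Qed.

Lemma ps_diff m n sa : (n <= m)%N -> `|ps m sa - ps n sa| <= M * (sphi m - sphi n).
Proof.
move=> nm.
have e1 : ps m sa - ps n sa = \sum_(n <= t < m) Phi g d t * f t sa.
  by rewrite /ps (@big_cat_nat _ _ _ n 0 m _ _ (leq0n n) nm) /= addrAC subrr add0r.
have e2 : sphi m - sphi n = \sum_(n <= t < m) Phi g d t.
  by rewrite /sphi (@big_cat_nat _ _ _ n 0 m _ _ (leq0n n) nm) /= addrAC subrr add0r.
rewrite e1 e2.
rewrite mulr_sumr; apply: (le_trans (ler_norm_sum _ _ _)); apply: ler_sum => t _.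
by rewrite normrM ger0_norm ?phi0 // mulrC ler_wpM2r ?phi0 //; have [_] := f_prop t.
Qed.

Lemma ps_cvg sa : cvgn (fun n => ps n sa).
Proof.
apply: (@normed_cvg _ R^o (fun t => Phi g d t * f t sa)).
apply: (@series_le_cvg _ _ (fun t => M * Phi g d t)).
- by move=> n; exact: normr_ge0.
- by move=> n; rewrite mulr_ge0 ?phi0.
- move=> n /=; rewrite normrM ger0_norm ?phi0 // mulrC ler_wpM2r ?phi0 //; have [_] := f_prop n; apply.
- have -> : series (fun t => M * Phi g d t) = (fun n => M * sphi n).
    by apply: boolp.funext => n; rewrite /series /sphi /= mulr_sumr.
  by apply: is_cvgMr; exact: sphi_cvg.
Qed.

Lemma Q_cvg sa : ps n sa @[n --> \oo] --> Qd P pi r g d sa.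
Proof. exact: ps_cvg. Qed.

Lemma ps_BM n : BM (ps n).
Proof.
apply: BM_sum => t; exact: BM_scale (f_BM t).
Qed.

Lemma Q_tail n sa : `|Qd P pi r g d sa - ps n sa| <= M * (Lphi - sphi n).
Proof.
have h1 : `|ps m sa - ps n sa| @[m --> \oo] --> `|Qd P pi r g d sa - ps n sa|.
  apply: cvg_norm; apply: cvgB; [exact: Q_cvg | exact: cvg_cst].
have h2 : M * (sphi m - sphi n) @[m --> \oo] --> M * (Lphi - sphi n).
  apply: cvgMr; apply: cvgB; [exact: sphi_cvg | exact: cvg_cst].
apply: (ler_cvg_to h1 h2).
- by near=> m; apply: ps_diff; near: m; exists n.
Unshelve. all: by end_near.
Qed.

Lemma e_cvg : M * (Lphi - sphi n) @[n --> \oo] --> 0.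
Proof.
rewrite -(mulr0 M) -(subrr Lphi).
apply: cvgMr; apply: cvgB; [exact: cvg_cst | exact: sphi_cvg].
Qed.

Lemma ps0 sa : ps 0 sa = 0.
Proof. by rewrite /ps big_geq. Qed.

Lemma Q_BM : BM (Qd P pi r g d).
Proof.
split.
  apply: (measurable_fun_cvg (h := ps)) => [m|sa _]; first by have [] := ps_BM m.
  exact: Q_cvg.
exists (M * (Lphi - sphi 0)) => sa.
by have := Q_tail 0 sa; rewrite ps0 subr0.
Qed.

Lemma NQ_cvg sa :
  \sum_(0 <= t < n) Phi g d t * f t.+1 sa @[n --> \oo] --> N (Qd P pi r g d) sa.
Proof.
apply: (@squeeze0 _ _ (fun n => M * (Lphi - sphi n))); first exact: e_cvg.
move=> n.
have -> : \sum_(0 <= t < n) Phi g d t * f t.+1 sa = N (ps n) sa.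
  rewrite /ps (N_sum P pi); last by move=> t; exact: BM_scale (f_BM t).
  by apply: eq_bigr => t _; rewrite (N_scale P pi) //; exact: f_BM.
rewrite -[X in `|X|]/((fun sa => N (Qd P pi r g d) sa - N (ps n) sa) sa).
rewrite -(N_sub P pi _ _ Q_BM (ps_BM n)).
apply: (N_le P pi (M := M * (Lphi - sphi n))).
  by have [] := BM_sub Q_BM (ps_BM n).
by move=> z; exact: Q_tail.
Qed.

End Fixd.
Section FixD.
Variables (D : nat) (hg : forall i, (i <= D)%N -> 0 < g i < 1).

Lemma hgd d : (d <= D)%N -> forall i, (i <= d)%N -> 0 < g i < 1.
Proof. by move=> dD i id; apply: hg; exact: leq_trans id dD. Qed.

Lemma QBM d : (d <= D)%N -> BM (Qd P pi r g d).
Proof. by move=> dD; exact: (Q_BM d (hgd d dD)). Qed.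

Definition hD sa' := \sum_(0 <= d < D) g d * Qd P pi r g d sa'.

Lemma hD_BM : BM hD.
Proof.
apply: BM_sumn => i iD; apply: BM_scale; apply: QBM; exact: ltnW.
Qed.

Lemma rD_eq sa : rD P pi r g D sa = r sa + \sum_(0 <= d < D) g d * N (Qd P pi r g d) sa.
Proof.
rewrite /rD -/hD (N_add P pi _ _ (BM_cst (r sa)) hD_BM) /= N_cst; congr (_ + _).
rewrite /hD (N_sumn P pi); last first.
  by move=> i iD; apply: BM_scale; apply: QBM; exact: ltnW.
apply: eq_big_nat => d /andP[_ dD]; rewrite (N_scale P pi) //; apply: QBM.
exact: ltnW.
Qed.

Lemma TD_Q : TD P pi r g D (Qd P pi r g D) = Qd P pi r g D.
Proof.
apply: boolp.funext => sa; rewrite /TD rD_eq.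
pose a d n := \sum_(0 <= t < n) Phi g d t * f t.+1 sa.
have h1 : (fun n => r sa + \sum_(0 <= d < D.+1) g d * a d n) @ \oo -->
    r sa + \sum_(0 <= d < D.+1) g d * N (Qd P pi r g d) sa.
  apply: cvgD; first exact: cvg_cst.
  apply: cvg_bigsum => d dD; apply: cvgMr; exact: (NQ_cvg d (hgd d dD) sa).
have e : forall n, r sa + \sum_(0 <= d < D.+1) g d * a d n = ps D n.+1 sa.
  move=> n; rewrite /ps [RHS]big_nat_recl // Phid0 mul1r /=; congr (_ + _).
  rewrite /a; under eq_bigr do rewrite mulr_sumr.
  rewrite exchange_big_nat /=; apply: eq_bigr => t _.
  rewrite Phi_rec big_distrl /= big_mkord; apply: eq_bigr => d _.
  by rewrite mulrA.
have h2 : ps D n.+1 sa @[n --> \oo] --> Qd P pi r g D sa.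
  by move: (Q_cvg D hg sa); rewrite -cvg_shiftS.
have ee : (fun n => r sa + \sum_(0 <= d < D.+1) g d * a d n) = (fun n => ps D n.+1 sa).
  by apply: boolp.funext => n; exact: e.
rewrite ee in h1.
rewrite -addrA -big_nat_recr //=.
exact: (cvg_unique _ h1 h2).
Qed.

End FixD.
End Main.


Section Sup.
Context {T : Type} {R : realType}.

Lemma supnorm_ge (f : T -> R) : bounded_fn f -> forall x, `|f x| <= supnorm f.
Proof.
move=> [B hB] x; apply: ub_le_sup; last by exists x.
by exists B => _ [y _ <-].
Qed.

Lemma supnorm_le (f : T -> R) B : 0 <= B -> (forall x, `|f x| <= B) -> supnorm f <= B.
Proof.
move=> B0 hB; rewrite /supnorm.
have [ne|e0] := pselect ([set `|f x| | x in [set: T]] !=set0).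
  by apply: ge_sup => // _ [y _ <-].
have -> : [set `|f x| | x in [set: T]] = set0.
  by apply/seteqP; split => // y Ey; exfalso; apply: e0; exists y.
by rewrite sup0.
Qed.

Lemma supnorm_ge0 (f : T -> R) : bounded_fn f -> 0 <= supnorm f.
Proof.
move=> hb.
have [[y [x _ hx]]|e0] := pselect ([set `|f x| | x in [set: T]] !=set0).
  exact: le_trans (normr_ge0 _) (supnorm_ge _ hb x).
rewrite /supnorm; have -> : [set `|f x| | x in [set: T]] = set0.
  by apply/seteqP; split => // y Ey; exfalso; apply: e0; exists y.
by rewrite sup0.
Qed.
End Sup.

Theorem proposition1 (R : realType) (d1 d2 : measure_display)
  (S : measurableType d1) (A : measurableType d2)
  (P : R.-pker (S * A)%type ~> S) (r : S * A -> R)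
  (pi : R.-pker S ~> A) (D : nat) (gamma : nat -> R) :
  measurable_fun [set: S * A] r -> bounded_fn r ->
  (forall d, (d <= D)%N -> 0 < gamma d < 1) ->
  (* T_pi^D maps bounded measurable functions to bounded measurable functions *)
  (forall q : S * A -> R, measurable_fun [set: S * A] q -> bounded_fn q ->
     measurable_fun [set: S * A] (TD P pi r gamma D q) /\
     bounded_fn (TD P pi r gamma D q)) /\
  (* gamma_D-contraction in the supremum norm *)
  (forall q1 q2 : S * A -> R,
     measurable_fun [set: S * A] q1 -> bounded_fn q1 ->
     measurable_fun [set: S * A] q2 -> bounded_fn q2 ->
     supnorm (fun sa => TD P pi r gamma D q1 sa - TD P pi r gamma D q2 sa)
       <= gamma D * supnorm (fun sa => q1 sa - q2 sa)) /\
  (* Q_D^pi is a (bounded measurable) fixed point ... *)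
  (measurable_fun [set: S * A] (Qd P pi r gamma D) /\
   bounded_fn (Qd P pi r gamma D) /\
   TD P pi r gamma D (Qd P pi r gamma D) = Qd P pi r gamma D) /\
  (* ... and the unique one *)
  (forall q : S * A -> R, measurable_fun [set: S * A] q -> bounded_fn q ->
     TD P pi r gamma D q = q -> q = Qd P pi r gamma D).
Proof.
move=> mr [Mr hMr] hg.
have hM : forall z, `|r z| <= `|Mr| by move=> z; exact: le_trans (hMr z) (ler_norm Mr).
have M0 : 0 <= `|Mr| by [].
have /andP[gD0 gD1] := hg D (leqnn D).
have QB := QBM P pi r gamma `|Mr| mr hM M0 D hg D (leqnn D).
have TD_BM : forall q, BM q -> BM (TD P pi r gamma D q).
  move=> q hq.
  have -> : TD P pi r gamma D q = (fun sa => (r sa + \sum_(0 <= d < D)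
      gamma d * next_exp P pi (Qd P pi r gamma d) sa) + gamma D * next_exp P pi q sa).
    by apply: boolp.funext => sa; rewrite /TD (rD_eq P pi r gamma `|Mr| mr hM M0 D hg).
  apply: BM_add; last by apply: BM_scale; exact: N_BM.
  apply: BM_add; first by split => //; exists Mr.
  apply: BM_sumn => i iD; apply: BM_scale; apply: N_BM.
  by apply: (QBM P pi r gamma `|Mr| mr hM M0 D hg); exact: ltnW.
have contr : forall q1 q2, BM q1 -> BM q2 ->
    supnorm (fun sa => TD P pi r gamma D q1 sa - TD P pi r gamma D q2 sa)
       <= gamma D * supnorm (fun sa => q1 sa - q2 sa).
  move=> q1 q2 h1 h2.
  have h12 := BM_sub h1 h2.
  apply: supnorm_le; first by apply: mulr_ge0; [exact: ltW | apply: supnorm_ge0; case: h12].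
  move=> sa.
  have -> : TD P pi r gamma D q1 sa - TD P pi r gamma D q2 sa =
      gamma D * (next_exp P pi q1 sa - next_exp P pi q2 sa).
    by rewrite /TD; ring.
  have -> : next_exp P pi q1 sa - next_exp P pi q2 sa =
      next_exp P pi (fun z => q1 z - q2 z) sa by rewrite (N_sub P pi _ _ h1 h2).
  rewrite normrM gtr0_norm // ler_pM2l //.
  apply: (N_le P pi); first by case: h12.
  by apply: supnorm_ge; case: h12.
split.
  by move=> q mq bq; have [] := TD_BM q (conj mq bq).
split.
  by move=> q1 q2 m1 b1 m2 b2; apply: contr.
have fix_eq := TD_Q P pi r gamma `|Mr| mr hM M0 D hg.
split.
  by case: QB => mQ bQ.
move=> q mq bq hq.
have hc := contr q (Qd P pi r gamma D) (conj mq bq) QB.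
rewrite hq fix_eq in hc.
have hs0 := supnorm_ge0 _ (proj2 (BM_sub (conj mq bq) QB)).
have hs : supnorm (fun sa => q sa - Qd P pi r gamma D sa) <= 0 by nra.
apply: boolp.funext => sa; apply/eqP; rewrite -subr_eq0 -normr_le0.
apply: (le_trans _ hs); apply: (supnorm_ge (fun sa => q sa - Qd P pi r gamma D sa)).
exact: (proj2 (BM_sub (conj mq bq) QB)).
Qed.
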